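(* Suppose Assumption A holds and Assumption B holds with $p=3$. Let $\{(x^k,m^k)\}_{k\ge0}$ be generated by Algorithm 1 with $q=2$, step sizes $\{\eta_k\}_{k\ge0}$, and parameters satisfying, for all $k\ge0$, $\theta_{k,1}/\gamma_{k,1}+\theta_{k,2}/\gamma_{k,2}=1$, $\theta_{k,1}/\gamma_{k,1}^2+\theta_{k,2}/\gamma_{k,2}^2=1$ and $\theta_{k,1}+\theta_{k,2}\in(0,1)$. Let $\{p_k\}_{k\ge0}$ be a positive sequence with \[ (1-\theta_{k,1}-\theta_{k,2})p_{k+1}\le\big(1-(\theta_{k,1}+\theta_{k,2})/2\big)p_k\qquad\forall k\ge0, \] and define $P_k=f(x^k)+p_k\|m^k-\nabla f(x^k)\|^2$. Then for all $k\ge0$, \[ \mathbb{E}_{\xi^{k+1}}[P_{k+1}]\le P_k-\eta_k\|\nabla f(x^k)\|+\frac{L_1}{2}\eta_k^2+\frac{2\eta_k^2}{(\theta_{k,1}+\theta_{k,2})p_k}+\frac{L_3^2\eta_k^6\theta_{k,1}^2p_{k+1}}{12\gamma_{k,1}^6(\theta_{k,1}+\theta_{k,2})}+\frac{L_3^2\eta_k^6\theta_{k,2}^2p_{k+1}}{12\gamma_{k,2}^6(\theta_{k,1}+\theta_{k,2})}+\frac{L_3^2\eta_k^6p_{k+1}}{12(\theta_{k,1}+\theta_{k,2})}+2(\theta_{k,1}^2+\theta_{k,2}^2)p_{k+1}\sigma^2 . \]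
   Context: Problem: minimize $f:\mathbb{R}^n\to\mathbb{R}$, where only a stochastic gradient estimator $G(\cdot;\xi)$ is accessible, $\xi$ being a random variable with sample space $\Xi$. $\|\cdot\|$ is the Euclidean norm. Assumption A: (a) there is a finite $f_{\mathrm{low}}$ with $f(x)\ge f_{\mathrm{low}}$ for all $x$; (b) there is $L_1>0$ with $\|\nabla f(y)-\nabla f(x)\|\le L_1\|y-x\|$ for all $x,y$; (c) $\mathbb{E}_\xi[G(x;\xi)]=\nabla f(x)$ and $\mathbb{E}_\xi[\|G(x;\xi)-\nabla f(x)\|^2]\le\sigma^2$ for all $x$, for some $\sigma>0$. Assumption B: $f$ is $p$ times continuously differentiable for some $p\ge2$ and there is $L_p>0$ with $\|D^pf(y)-D^pf(x)\|_{(p)}\le L_p\|y-x\|$ for all $x,y$, where $D^pf(x)$ is the $p$th derivative as a symmetric $p$-linear form and $\|\mathcal{T}\|_{(p)}=\max\{\mathcal{T}[h_1,\dots,h_p]:\|h_i\|\le 1\}$. Algorithm 1 (SFOM with multi-extrapolated momentum): inputs $x^0\in\mathbb{R}^n$, step sizes $\eta_k>0$, an integer $q\ge1$, extrapolation parameters $\gamma_{k,t}\in(0,1)$ and weighting parameters $\theta_{k,t}\in\mathbb{R}$ ($1\le t\le q$, $k\ge0$) with $\sum_{t=1}^q\theta_{k,t}\in(0,1)$ for all $k\ge0$. Initialize $x^{-1}=x^0$, $m^{-1}=0$, $(\gamma_{-1,t},\theta_{-1,t})=(1,1/q)$ for all $t$. For $k=0,1,2,\dots$: $z^{k,t}=x^k+\frac{1-\gamma_{k-1,t}}{\gamma_{k-1,t}}(x^k-x^{k-1})$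 for $1\le t\le q$; $m^k=(1-\sum_{t=1}^q\theta_{k-1,t})m^{k-1}+\sum_{t=1}^q\theta_{k-1,t}G(z^{k,t};\xi^k)$; $x^{k+1}=x^k-\eta_k m^k/\|m^k\|$. Here $\xi^0,\xi^1,\dots$ are independent samples of $\xi$ (and $m^k\neq0$ is implicitly assumed). $\mathbb{E}_{\xi^{k+1}}[\cdot]$ denotes expectation with respect to $\xi^{k+1}$ conditional on $\xi^0,\dots,\xi^k$. *)

(* Defs.v *)
From HB Require Import structures.
From mathcomp Require Import all_boot all_order all_algebra.
From mathcomp Require Import all_classical all_reals all_analysis.
Set Implicit Arguments. Unset Strict Implicit. Unset Printing Implicit Defensive.
Import Order.TTheory GRing.Theory Num.Theory.
Local Open Scope ring_scope.

Definition dotv (R : realType) (n : nat) (u v : 'rV[R]_n) : R :=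
  \sum_(i < n) u 0 i * v 0 i.
Definition enorm (R : realType) (n : nat) (u : 'rV[R]_n) : R :=
  Num.sqrt (dotv u u).

Definition frechet_at (R : realType) (n : nat) (phi : 'rV[R]_n -> R)
  (x : 'rV[R]_n) (L : 'rV[R]_n -> R) : Prop :=
  (forall (a : R) (u v : 'rV[R]_n), L (a *: u + v) = a * L u + L v) /\
  (forall eps : R, 0 < eps -> exists2 delta : R, 0 < delta &
     forall h : 'rV[R]_n, enorm h < delta ->
       `|phi (x + h) - phi x - L h| <= eps * enorm h).

(* Algorithm 1 (SFOM with multi-extrapolated momentum), general q.
   gamma k t, theta k t are gamma_{k,t}, theta_{k,t} (k >= 0);
   the "previous" parameters at iteration k are those of index k-1,
   with (gamma_{-1,t}, theta_{-1,t}) = (1, 1/q). s j is the sample xi^j. *)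
Definition gam_prev (R : realType) (q : nat) (gamma : nat -> 'I_q -> R)
  (k : nat) (t : 'I_q) : R :=
  if k is k'.+1 then gamma k' t else 1.
Definition th_prev (R : realType) (q : nat) (theta : nat -> 'I_q -> R)
  (k : nat) (t : 'I_q) : R :=
  if k is k'.+1 then theta k' t else q%:R^-1.

Definition sfom_mom (R : realType) (n : nat) (Xi : Type)
  (G : 'rV[R]_n -> Xi -> 'rV[R]_n) (q : nat)
  (gamma theta : nat -> 'I_q -> R) (s : nat -> Xi) (k : nat)
  (x xp mp : 'rV[R]_n) : 'rV[R]_n :=
  (1 - \sum_(t < q) th_prev theta k t) *: mp
  + \sum_(t < q) th_prev theta k t *:
      G (x + ((1 - gam_prev gamma k t) / gam_prev gamma k t) *: (x - xp)) (s k).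

(* state at iteration k: (x^k, x^{k-1}, m^{k-1}) *)
Fixpoint sfom_state (R : realType) (n : nat) (Xi : Type)
  (G : 'rV[R]_n -> Xi -> 'rV[R]_n) (q : nat) (x0 : 'rV[R]_n)
  (eta : nat -> R) (gamma theta : nat -> 'I_q -> R) (s : nat -> Xi)
  (k : nat) : 'rV[R]_n * 'rV[R]_n * 'rV[R]_n :=
  match k with
  | 0 => (x0, x0, 0)
  | k'.+1 =>
      let: (x, xp, mp) := sfom_state G x0 eta gamma theta s k' in
      let m := sfom_mom G gamma theta s k' x xp mp in
      (x - (eta k' / enorm m) *: m, x, m)
  end.

Definition sfom_x (R : realType) (n : nat) (Xi : Type)
  (G : 'rV[R]_n -> Xi -> 'rV[R]_n) (q : nat) (x0 : 'rV[R]_n)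
  (eta : nat -> R) (gamma theta : nat -> 'I_q -> R) (s : nat -> Xi)
  (k : nat) : 'rV[R]_n :=
  (sfom_state G x0 eta gamma theta s k).1.1.

Definition sfom_m (R : realType) (n : nat) (Xi : Type)
  (G : 'rV[R]_n -> Xi -> 'rV[R]_n) (q : nat) (x0 : 'rV[R]_n)
  (eta : nat -> R) (gamma theta : nat -> 'I_q -> R) (s : nat -> Xi)
  (k : nat) : 'rV[R]_n :=
  let: (x, xp, mp) := sfom_state G x0 eta gamma theta s k in
  sfom_mom G gamma theta s k x xp mp.

Definition resample (Xi : Type) (s : nat -> Xi) (j : nat) (xi : Xi) : nat -> Xi :=
  fun i => if i == j then xi else s i.

(* Main.v *)
Require Import Defs.
From HB Require Import structures.
From mathcomp Require Import all_boot all_order all_algebra.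
From mathcomp Require Import all_classical all_reals all_analysis.
From mathcomp Require Import measurable_realfun.
From mathcomp Require Import ring lra.
Import Order.TTheory GRing.Theory Num.Theory.
Import numFieldNormedType.Exports.
Set Implicit Arguments. Unset Strict Implicit. Unset Printing Implicit Defensive.
Local Open Scope ring_scope.
Section Vec.
Variables (R : realType) (n : nat).
Implicit Types u v w : 'rV[R]_n.

Lemma dotvC u v : dotv u v = dotv v u.
Proof. by apply: eq_bigr => i _; rewrite mulrC. Qed.

Lemma dotvDl u v w : dotv (u + v) w = dotv u w + dotv v w.
Proof. by rewrite /dotv -big_split; apply: eq_bigr => i _; rewrite mxE mulrDl. Qed.

Lemma dotvZl a u v : dotv (a *: u) v = a * dotv u v.
Proof. by rewrite /dotv mulr_sumr; apply: eq_bigr => i _; rewrite mxE mulrA. Qed.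

Lemma dotvNl u v : dotv (- u) v = - dotv u v.
Proof. by rewrite -scaleN1r dotvZl mulN1r. Qed.

Lemma dotvBl u v w : dotv (u - v) w = dotv u w - dotv v w.
Proof. by rewrite dotvDl dotvNl. Qed.

Lemma dotvDr u v w : dotv w (u + v) = dotv w u + dotv w v.
Proof. by rewrite dotvC dotvDl !(dotvC w). Qed.

Lemma dotvZr a u v : dotv v (a *: u) = a * dotv v u.
Proof. by rewrite dotvC dotvZl dotvC. Qed.

Lemma dotvBr u v w : dotv w (u - v) = dotv w u - dotv w v.
Proof. by rewrite dotvC dotvBl !(dotvC w). Qed.

Lemma dotv0l v : dotv 0 v = 0.
Proof. by rewrite /dotv big1 // => i _; rewrite mxE mul0r. Qed.

Lemma dotv0r v : dotv v 0 = 0.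
Proof. by rewrite dotvC dotv0l. Qed.

Lemma dotv_ge0 u : 0 <= dotv u u.
Proof. by apply: sumr_ge0 => i _; rewrite -expr2 sqr_ge0. Qed.

Lemma dotv_eq0 u : dotv u u = 0 -> u = 0.
Proof.
move=> /eqP; rewrite psumr_eq0; last by move=> i _; rewrite -expr2 sqr_ge0.
move=> /allP H; apply/rowP => i; rewrite mxE.
by have := H i (mem_index_enum _); rewrite -expr2 sqrf_eq0 => /eqP.
Qed.

Lemma enorm_ge0 u : 0 <= enorm u.
Proof. exact: sqrtr_ge0. Qed.

Lemma enorm_sq u : enorm u ^+ 2 = dotv u u.
Proof. by rewrite sqr_sqrtr // dotv_ge0. Qed.

Lemma enorm_eq0 u : enorm u = 0 -> u = 0.
Proof. by move=> H; apply: dotv_eq0; rewrite -enorm_sq H expr0n. Qed.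

Lemma enorm0 : enorm (0 : 'rV[R]_n) = 0.
Proof. by rewrite /enorm dotv0l sqrtr0. Qed.

Lemma enormZ a u : enorm (a *: u) = `|a| * enorm u.
Proof.
by rewrite /enorm dotvZl dotvZr mulrA -expr2 sqrtrM ?sqr_ge0 // sqrtr_sqr.
Qed.

Lemma enormN u : enorm (- u) = enorm u.
Proof. by rewrite -scaleN1r enormZ normrN normr1 mul1r. Qed.

Lemma CS u v : dotv u v <= enorm u * enorm v.
Proof.
have [u0|u0] := eqVneq (enorm u) 0.
  by rewrite (enorm_eq0 u0) dotv0l enorm0 mul0r.
have [v0|v0] := eqVneq (enorm v) 0.
  by rewrite (enorm_eq0 v0) dotv0r enorm0 mulr0.
have hu : 0 < enorm u by rewrite lt0r u0 enorm_ge0.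
have hv : 0 < enorm v by rewrite lt0r v0 enorm_ge0.
have H := dotv_ge0 (enorm v *: u - enorm u *: v).
rewrite !(dotvBl, dotvBr, dotvZl, dotvZr) -!enorm_sq (dotvC v u) in H.
have hab : 0 < enorm u * enorm v by apply: mulr_gt0.
nra.
Qed.

Lemma CSabs u v : `|dotv u v| <= enorm u * enorm v.
Proof.
rewrite ler_norml CS andbT; have := CS (- u) v.
by rewrite dotvNl enormN lerNl.
Qed.

Lemma enorm_sqD u v : enorm (u + v) ^+ 2 = enorm u ^+ 2 + 2 * dotv u v + enorm v ^+ 2.
Proof. rewrite !enorm_sq dotvDl !dotvDr (dotvC v u); ring. Qed.

Lemma enormD u v : enorm (u + v) <= enorm u + enorm v.
Proof.
have h1 := enorm_ge0 (u + v); have h2 := enorm_ge0 u; have h3 := enorm_ge0 v.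
have := enorm_sqD u v; have := CS u v; nra.
Qed.

Lemma enorm_sqD2 u v : enorm (u + v) ^+ 2 <= 2 * enorm u ^+ 2 + 2 * enorm v ^+ 2.
Proof.
have := enorm_sqD u v; have := enorm_sqD u (- v).
rewrite enormN dotvC dotvNl dotvC => h1 h2; have := sqr_ge0 (enorm (u - v)); nra.
Qed.

Lemma dotv_self u : dotv u u = enorm u ^+ 2.
Proof. by rewrite enorm_sq. Qed.

End Vec.
Section Calc.
Local Open Scope classical_set_scope.
Local Open Scope ring_scope.
Variables (R : realType) (n : nat).
Implicit Types u v w x y : 'rV[R]_n.

Lemma frechet_lin (F : 'rV[R]_n -> R) x L : frechet_at F x L ->
  L 0 = 0 /\ (forall a u, L (a *: u) = a * L u) /\ (forall u v, L (u + v) = L u + L v).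
Proof.
move=> [lin _].
have L0 : L 0 = 0.
  have := lin 1 0 0; rewrite scale1r addr0 mul1r => h.
  by apply: (addrI (L 0)); rewrite addr0 -h.
split=> //; split=> [a u|u v].
  by have := lin a u 0; rewrite addr0 L0 addr0.
by have := lin 1 u v; rewrite scale1r mul1r.
Qed.

Lemma frechet_uniq (F : 'rV[R]_n -> R) x L L' :
  frechet_at F x L -> frechet_at F x L' -> forall h, L h = L' h.
Proof.
move=> H1 H2 h.
have [L0 [LZ LD]] := frechet_lin H1.
have [L'0 [L'Z L'D]] := frechet_lin H2.
have [h0|h0] := eqVneq (enorm h) 0.
  by rewrite (enorm_eq0 h0) L0 L'0.
have hp : 0 < enorm h by rewrite lt0r h0 enorm_ge0.
apply/eqP; rewrite -subr_eq0; apply/negPn/negP => ne.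
set a := L h - L' h in ne.
have ap : 0 < `|a| by rewrite normr_gt0.
set eps := `|a| / (4 * enorm h).
have ep : 0 < eps by rewrite divr_gt0 // mulr_gt0.
have [d1 d1p D1] := H1.2 eps ep.
have [d2 d2p D2] := H2.2 eps ep.
set t := Num.min d1 d2 / (2 * enorm h).
have tp : 0 < t by rewrite divr_gt0 ?mulr_gt0 // lt_min d1p d2p.
have nth : enorm (t *: h) = Num.min d1 d2 / 2.
  rewrite enormZ gtr0_norm // /t; field; exact/lt0r_neq0.
have mp : 0 < Num.min d1 d2 by rewrite lt_min d1p d2p.
have lt1 : enorm (t *: h) < d1.
  rewrite nth; apply: (@lt_le_trans _ _ (Num.min d1 d2)); first lra.
  by rewrite ge_min lexx.
have lt2 : enorm (t *: h) < d2.
  rewrite nth; apply: (@lt_le_trans _ _ (Num.min d1 d2)); first lra.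
  by rewrite ge_min lexx orbT.
have E1 := D1 _ lt1; have E2 := D2 _ lt2.
rewrite LZ in E1; rewrite L'Z in E2.
have : `|t * a| <= 2 * eps * enorm (t *: h).
  have -> : t * a = (F (x + t *: h) - F x - t * L' h) - (F (x + t *: h) - F x - t * L h).
    rewrite /a; ring.
  apply: (le_trans (ler_normB _ _)); lra.
move=> K; rewrite normrM (gtr0_norm tp) enormZ (gtr0_norm tp) in K.
have E : 2 * eps * (t * enorm h) = t * `|a| / 2.
  rewrite /eps; field; exact/lt0r_neq0.
rewrite E in K.
have : 0 < t * `|a| by apply: mulr_gt0.
lra.
Qed.

Lemma frechet_deriv (F : 'rV[R]_n -> R) (L : 'rV[R]_n -> 'rV[R]_n -> R) x v (t : R) :
  (forall y, frechet_at F y (L y)) ->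
  is_derive t 1 (fun s => F (x + s *: v)) (L (x + t *: v) v).
Proof.
move=> HF.
set y := x + t *: v; set l := L y v.
have [L0 [LZ LD]] := frechet_lin (HF y).
have H : (fun h : R => h^-1 *: (((fun s => F (x + s *: v)) \o shift t) (h *: 1)
                      - F (x + t *: v))) @ (0 : R)^' --> l.
  apply/cvgrPdist_le => eps ep.
  set e' := eps / (enorm v + 1).
  have vp : 0 < enorm v + 1 by have := enorm_ge0 v; lra.
  have e'p : 0 < e' by rewrite divr_gt0.
  have [del delp D] := (HF y).2 e' e'p.
  have dp : 0 < del / (enorm v + 1) by rewrite divr_gt0.
  near=> h.
  have hne : h != 0 by near: h; exact: nbhs_dnbhs_neq.
  have hlt : `|h| < del / (enorm v + 1) by near: h; exact: dnbhs0_lt.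
  have hp : 0 < `|h| by rewrite normr_gt0.
  rewrite /= /shift /= [h *: 1]mulr1.
  have -> : x + (h + t) *: v = y + h *: v by rewrite /y scalerDl addrAC addrA.
  have hv : enorm (h *: v) < del.
    rewrite enormZ.
    have K : `|h| * (enorm v + 1) < del by rewrite -ltr_pdivlMr.
    have := normr_ge0 h; nra.
  have E := D _ hv; rewrite LZ enormZ in E.
  have -> : l - h^-1 *: (F (y + h *: v) - F y) =
            - h^-1 * (F (y + h *: v) - F y - h * l).
    have -> : forall z : R, h^-1 *: z = h^-1 * z by [].
    rewrite /l; field; exact: hne.
  rewrite normrM normrN normfV ler_pdivrMl // -/l.
  apply: (le_trans E).
  have Ee : e' * (enorm v + 1) = eps by rewrite /e'; field; exact: lt0r_neq0.
  have := enorm_ge0 v; have := normr_ge0 h; nra.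
apply: DeriveDef; first by apply/cvg_ex; exists l; exact: H.
exact: cvg_lim H.
Unshelve. all: by end_near.
Qed.

End Calc.
Section Der.
Local Open Scope classical_set_scope.
Local Open Scope ring_scope.
Variable R : realType.
Implicit Types f g : R -> R.

Lemma dB f g df dg (t : R) : is_derive t 1 f df -> is_derive t 1 g dg ->
  is_derive t 1 (fun s => f s - g s) (df - dg).
Proof. move=> H1 H2; exact: (@is_deriveB _ _ _ f g t 1 df dg H1 H2). Qed.

Lemma dD f g df dg (t : R) : is_derive t 1 f df -> is_derive t 1 g dg ->
  is_derive t 1 (fun s => f s + g s) (df + dg).
Proof. move=> H1 H2; exact: (@is_deriveD _ _ _ f g t 1 df dg H1 H2). Qed.

Lemma sc (a b : R) : a *: b = a * b.
Proof. by []. Qed.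

Lemma dMl (c : R) f df (t : R) : is_derive t 1 f df ->
  is_derive t 1 (fun s => c * f s) (c * df).
Proof.
move=> H; case: (@is_deriveM _ _ (cst c) f t 1 0 df _ H) => d1 d2.
apply: DeriveDef; first exact: d1.
transitivity (c *: df + f t *: 0 : R); first exact: d2.
rewrite !sc; ring.
Qed.

Lemma did (t : R) : is_derive t 1 (fun s : R => s) 1.
Proof. exact: is_derive_id. Qed.

Lemma dsq (t : R) : is_derive t 1 (fun s : R => s * s) (2 * t).
Proof.
case: (@is_deriveM _ _ id id t 1 1 1 (did t) (did t)) => d1 d2.
apply: DeriveDef; first exact: d1.
transitivity (t *: 1 + t *: 1 : R); first exact: d2.
rewrite !sc; ring.
Qed.

Lemma dcube (t : R) : is_derive t 1 (fun s : R => s * s * s) (3 * (t * t)).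
Proof.
case: (@is_deriveM _ _ (fun s : R => s * s) id t 1 (2 * t) 1 (dsq t) (did t)) => d1 d2.
apply: DeriveDef; first exact: d1.
transitivity ((t * t) *: 1 + t *: (2 * t) : R); first exact: d2.
rewrite !sc; ring.
Qed.

Lemma mono_le (g dg : R -> R) : (forall t : R, is_derive t 1 g (dg t)) ->
  (forall t : R, 0 <= t <= 1 -> dg t <= 0) -> forall t : R, 0 <= t <= 1 -> g t <= g 0.
Proof.
move=> Hd Hn t /andP[t0 t1].
have [->|tp] := eqVneq t 0; first by [].
have tp' : 0 < t by rewrite lt0r tp t0.
have cont : {within `[0, t], continuous g}.
  apply: derivable_within_continuous => z _.
  by have := Hd z; case.
have [c cI E] := MVT tp' (fun z _ => Hd z) cont.
rewrite -subr_le0 E subr0.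
have : 0 <= c <= 1.
  by move: cI; rewrite in_itv /= => /andP[c0 c1]; rewrite ltW //= ltW // (lt_le_trans c1).
by move=> /Hn Hc; rewrite mulr_le0_ge0.
Qed.

End Der.
Section Taylor.
Local Open Scope classical_set_scope.
Local Open Scope ring_scope.
Variables (R : realType) (n : nat).
Implicit Types u v w x y : 'rV[R]_n.

Lemma descent (f : 'rV[R]_n -> R) gf (L1 : R) :
  (forall x, frechet_at f x (dotv (gf x))) ->
  (forall x y, enorm (gf y - gf x) <= L1 * enorm (y - x)) ->
  forall x d, f (x + d) <= f x + dotv (gf x) d + L1 / 2 * enorm d ^+ 2.
Proof.
move=> Hf HL x d.
set c := dotv (gf x) d; set K := L1 / 2 * enorm d ^+ 2.
pose psi := fun s : R => f (x + s *: d) - c * s - K * (s * s).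
pose dpsi := fun s : R => dotv (gf (x + s *: d)) d - c * 1 - K * (2 * s).
have Hd : forall t : R, is_derive t 1 psi (dpsi t).
  move=> t; exact: (dB (dB (frechet_deriv x d t Hf) (dMl c (did t))) (dMl K (dsq t))).
have Hn : forall t : R, 0 <= t <= 1 -> dpsi t <= 0.
  move=> t /andP[t0 t1]; rewrite /dpsi /c mulr1 -dotvBl.
  have C1 := CS (gf (x + t *: d) - gf x) d.
  have := HL x (x + t *: d); rewrite addrAC subrr add0r enormZ ger0_norm // => H.
  have := enorm_ge0 d => H0.
  have := enorm_ge0 (gf (x + t *: d) - gf x) => H1.
  rewrite /K; nra.
have := mono_le Hd Hn (t:=1); rewrite ler01 lexx => /(_ isT).
by rewrite /psi scale1r scale0r addr0 !mulr0 !mulr1 !subr0; lra.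
Qed.

Lemma frechet_scale (F : 'rV[R]_n -> R) x L (c : R) :
  frechet_at F x L -> frechet_at (fun y => c * F y) x (fun u => c * L u).
Proof.
move=> [lin H]; split.
  by move=> a u v; rewrite lin; ring.
move=> eps ep.
have cp : 0 < `|c| + 1 by have := normr_ge0 c; lra.
have [del dp D] := H (eps / (`|c| + 1)) (divr_gt0 ep cp).
exists del => // h hd.
have -> : c * F (x + h) - c * F x - c * L h = c * (F (x + h) - F x - L h) by ring.
rewrite normrM; apply: (le_trans (ler_wpM2l (normr_ge0 c) (D h hd))).
have := enorm_ge0 h; have := normr_ge0 c.
have E : eps / (`|c| + 1) * (`|c| + 1) = eps by field; exact: lt0r_neq0.
have : 0 <= eps / (`|c| + 1) by rewrite divr_ge0 // ltW.
nra.
Qed.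

Variables (gf : 'rV[R]_n -> 'rV[R]_n)
  (D2 : 'rV[R]_n -> 'rV[R]_n -> 'rV[R]_n -> R)
  (D3 : 'rV[R]_n -> 'rV[R]_n -> 'rV[R]_n -> 'rV[R]_n -> R) (L3 : R).
Hypothesis HD2 : forall x h1, frechet_at (fun y => dotv (gf y) h1) x (D2 x h1).
Hypothesis HD3 : forall x h1 h2, frechet_at (fun y => D2 y h1 h2) x (D3 x h1 h2).
Hypothesis HL3 : forall x y h1 h2 h3, enorm h1 <= 1 -> enorm h2 <= 1 -> enorm h3 <= 1 ->
     D3 y h1 h2 h3 - D3 x h1 h2 h3 <= L3 * enorm (y - x).

Lemma D2Z x h (a : R) u : D2 x h (a *: u) = a * D2 x h u.
Proof. by have [_ [LZ _]] := frechet_lin (HD2 x h); rewrite LZ. Qed.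

Lemma D3Zr x h w (a : R) u : D3 x h w (a *: u) = a * D3 x h w u.
Proof. by have [_ [LZ _]] := frechet_lin (HD3 x h w); rewrite LZ. Qed.

Lemma D3Zm x h (a : R) w u : D3 x h (a *: w) u = a * D3 x h w u.
Proof.
have E : (fun y => D2 y h (a *: w)) = (fun y => a * D2 y h w).
  by apply/funext => y; rewrite D2Z.
have H1 := HD3 x h (a *: w); rewrite E in H1.
have H2 := frechet_scale a (HD3 x h w).
exact: (frechet_uniq H1 H2).
Qed.

Lemma D3_00 x h : D3 x h 0 0 = 0.
Proof. by have [L0 _] := frechet_lin (HD3 x h 0). Qed.

Lemma D3_lip x y h w : enorm h <= 1 ->
  `|D3 y h w w - D3 x h w w| <= L3 * enorm (y - x) * enorm w ^+ 2.
Proof.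
move=> h1.
have [w0|w0] := eqVneq (enorm w) 0.
  rewrite (enorm_eq0 w0) !D3_00 subrr normr0 enorm0 expr0n /= mulr0 //.
have wp : 0 < enorm w by rewrite lt0r w0 enorm_ge0.
set u := (enorm w)^-1 *: w.
have wu : w = enorm w *: u by rewrite /u scalerA divff // scale1r.
have un : enorm u <= 1.
  by rewrite /u enormZ ger0_norm ?invr_ge0 ?enorm_ge0 // mulVf.
have E : forall z, D3 z h w w = enorm w ^+ 2 * D3 z h u u.
  by move=> z; rewrite {1 2}wu D3Zm D3Zr expr2 mulrA.
rewrite !E -mulrBr normrM ger0_norm ?sqr_ge0 // mulrC ler_wpM2r ?sqr_ge0 //.
rewrite ler_norml (HL3 _ _ h1 un un) andbT.
have := HL3 y x h1 un un.
have -> : enorm (x - y) = enorm (y - x) by rewrite -enormN opprB.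
lra.
Qed.

Lemma taylor_sign (L3p : 0 <= L3) x w h (sg : R) : enorm h <= 1 -> `|sg| = 1 ->
  sg * (dotv (gf (x + w)) h - dotv (gf x) h - D2 x h w - D3 x h w w / 2)
    <= L3 * enorm w ^+ 3 / 6.
Proof.
move=> h1 sg1.
set b := D2 x h w; set c := D3 x h w w; set K := L3 * enorm w ^+ 3.
set a0 := dotv (gf x) h.
pose chi := fun s : R => sg * (D2 (x + s *: w) h w - b - c * s) - K / 2 * (s * s).
pose dchi := fun s : R => sg * (D3 (x + s *: w) h w w - 0 - c * 1) - K / 2 * (2 * s).
have Hchi : forall t : R, is_derive t 1 chi (dchi t).
  move=> t; apply: (dB _ (dMl _ (dsq t))); apply: dMl.
  apply: (dB (dB _ (is_derive_cst b t 1)) (dMl c (did t))).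
  exact: (frechet_deriv x w t (fun y => HD3 y h w)).
have Kge : 0 <= K by rewrite /K mulr_ge0 // exprn_ge0 // enorm_ge0.
have Hnchi : forall t : R, 0 <= t <= 1 -> dchi t <= 0.
  move=> t /andP[t0 t1]; rewrite /dchi subr0 mulr1.
  have := D3_lip x (x + t *: w) w h1.
  rewrite addrAC subrr add0r enormZ (ger0_norm t0) -/c => H.
  have := ler_norm (sg * (D3 (x + t *: w) h w w - c)).
  rewrite normrM sg1 mul1r => H'.
  have : L3 * (t * enorm w) * enorm w ^+ 2 = K * t by rewrite /K; ring.
  nra.
have chi_le : forall t : R, 0 <= t <= 1 -> chi t <= 0.
  move=> t tI; have := mono_le Hchi Hnchi tI.
  have -> : chi 0 = 0 by rewrite /chi scale0r addr0 /b; ring.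
  by [].
pose psi := fun s : R => sg * (dotv (gf (x + s *: w)) h - a0 - b * s - c / 2 * (s * s))
                         - K / 6 * (s * s * s).
pose dpsi := fun s : R => sg * (D2 (x + s *: w) h w - 0 - b * 1 - c / 2 * (2 * s))
                         - K / 6 * (3 * (s * s)).
have Hpsi : forall t : R, is_derive t 1 psi (dpsi t).
  move=> t; apply: (dB _ (dMl _ (dcube t))); apply: dMl.
  apply: (dB _ (dMl _ (dsq t))).
  apply: (dB (dB _ (is_derive_cst a0 t 1)) (dMl b (did t))).
  exact: (frechet_deriv x w t (fun y => HD2 y h)).
have Hnpsi : forall t : R, 0 <= t <= 1 -> dpsi t <= 0.
  move=> t tI; have := chi_le t tI; rewrite /chi /dpsi.
  have -> : sg * (D2 (x + t *: w) h w - 0 - b * 1 - c / 2 * (2 * t)) - K / 6 * (3 * (t * t))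
          = sg * (D2 (x + t *: w) h w - b - c * t) - K / 2 * (t * t) by field.
  by [].
have := mono_le Hpsi Hnpsi (t:=1); rewrite ler01 lexx => /(_ isT).
have -> : psi 0 = 0 by rewrite /psi scale0r addr0 /a0; ring.
have -> : psi 1 = sg * (dotv (gf (x + w)) h - dotv (gf x) h - D2 x h w - D3 x h w w / 2) - K / 6.
  by rewrite /psi scale1r /a0 /b /c; ring.
rewrite /K /b /c /a0; lra.
Qed.

Lemma taylor3 (L3p : 0 <= L3) x w h : enorm h <= 1 ->
  `|dotv (gf (x + w)) h - dotv (gf x) h - D2 x h w - D3 x h w w / 2|
    <= L3 * enorm w ^+ 3 / 6.
Proof.
move=> h1; rewrite ler_norml; apply/andP; split.
  have := taylor_sign (sg:=-1) L3p x w h1; rewrite normrN normr1 => /(_ erefl).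
  rewrite mulN1r; lra.
have := taylor_sign (sg:=1) L3p x w h1; rewrite normr1 => /(_ erefl).
by rewrite mul1r.
Qed.

End Taylor.
Section IntLib.
Local Open Scope classical_set_scope.
Local Open Scope ring_scope.
Variables (d : measure_display) (T : measurableType d) (R : realType)
  (P : probability T R).
Implicit Types f g : T -> R.

Definition intR f := P.-integrable setT (EFin \o f).
Definition Ir f : R := fine ((\int[P]_x (f x)%:E)%E).

Lemma IrE f : intR f -> (\int[P]_x (f x)%:E)%E = (Ir f)%:E.
Proof. by move=> H; rewrite /Ir fineK //; exact: integrable_fin_num H. Qed.

Lemma intR_meas f : intR f -> measurable_fun setT f.
Proof. by move=> /measurable_int /measurable_EFinP. Qed.

Lemma intRD f g : intR f -> intR g -> intR (fun x => f x + g x).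
Proof.
move=> H1 H2; apply: eq_integrable (integrableD _ H1 H2) => //.
Qed.

Lemma intRZ (k : R) f : intR f -> intR (fun x => k * f x).
Proof.
move=> H; apply: eq_integrable (integrableZl _ k H) => //.
Qed.

Lemma intRC (c : R) : intR (fun _ => c).
Proof. exact: finite_measure_integrable_cst. Qed.

Lemma intRB f g : intR f -> intR g -> intR (fun x => f x - g x).
Proof.
move=> H1 H2; have := intRD H1 (intRZ (-1) H2).
by apply: eq_integrable => // x _; rewrite /= mulN1r.
Qed.

Lemma intRS (I : Type) (s : seq I) (F : I -> T -> R) :
  (forall i, intR (F i)) -> intR (fun x => \sum_(i <- s) F i x).
Proof.
move=> H; elim: s => [|i s IH].
  by apply: eq_integrable (intRC 0) => // x _; rewrite /= big_nil.
by apply: eq_integrable (intRD (H i) IH) => // x _; rewrite /= big_cons.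
Qed.

Lemma IrD f g : intR f -> intR g -> Ir (fun x => f x + g x) = Ir f + Ir g.
Proof.
move=> H1 H2; rewrite /Ir.
rewrite (_ : (\int[P]_x ((f x + g x)%:E))%E = (\int[P]_x ((f x)%:E + (g x)%:E))%E) //.
by rewrite integralD // (IrE H1) (IrE H2).
Qed.

Lemma IrZ (k : R) f : intR f -> Ir (fun x => k * f x) = k * Ir f.
Proof.
move=> H; rewrite /Ir.
rewrite (_ : (\int[P]_x ((k * f x)%:E))%E = (\int[P]_x (k%:E * (f x)%:E))%E) //.
by rewrite integralZl // (IrE H).
Qed.

Lemma IrC (c : R) : Ir (fun _ => c) = c.
Proof.
rewrite /Ir (_ : (\int[P]_x (c%:E))%E = (\int[P]_x (cst c%:E) x)%E) //.
rewrite integral_cst //.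
have E : forall y : \bar R, y = 1%E -> fine (c%:E * y)%E = c.
  by move=> y ->; rewrite mule1.
apply: E; exact: probability_setT.
Qed.

Lemma IrB f g : intR f -> intR g -> Ir (fun x => f x - g x) = Ir f - Ir g.
Proof.
move=> H1 H2; rewrite (_ : (fun x => f x - g x) = (fun x => f x + (-1) * g x)).
  by rewrite IrD ?IrZ //; [ring | exact: intRZ].
by apply/funext => x; rewrite mulN1r.
Qed.

Lemma IrS (I : Type) (s : seq I) (F : I -> T -> R) :
  (forall i, intR (F i)) -> Ir (fun x => \sum_(i <- s) F i x) = \sum_(i <- s) Ir (F i).
Proof.
move=> H; elim: s => [|i s IH].
  by rewrite big_nil (_ : (fun x => _) = (fun _ => 0)) ?IrC //; apply/funext => x; rewrite big_nil.
rewrite big_cons (_ : (fun x => _) = (fun x => F i x + \sum_(j <- s) F j x)).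
  by rewrite IrD ?IH //; exact: intRS.
by apply/funext => x; rewrite big_cons.
Qed.

Lemma Ir_le f g : intR f -> intR g -> (forall x, f x <= g x) -> Ir f <= Ir g.
Proof.
move=> H1 H2 H; rewrite -lee_fin -(IrE H1) -(IrE H2).
by apply: le_integral => // x _; rewrite lee_fin.
Qed.

Lemma intR_ge0 f : measurable_fun setT f -> (forall x, 0 <= f x) ->
  ((\int[P]_x (f x)%:E)%E < +oo)%E -> intR f.
Proof.
move=> mf f0 fin; apply/integrableP; split; first exact/measurable_EFinP.
have E : (\int[P]_x `|(EFin \o f) x|)%E = (\int[P]_x (f x)%:E)%E.
  by apply: eq_integral => x _; rewrite /comp abse_EFin ger0_norm.
by rewrite E.
Qed.

Lemma intR_le f g : measurable_fun setT f -> intR g ->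
  (forall x, `|f x| <= g x) -> intR f.
Proof.
move=> mf H fg; apply: le_integrable H => //; first exact/measurable_EFinP.
move=> x _; rewrite /comp !abse_EFin lee_fin (le_trans (fg x)) //.
exact: ler_norm.
Qed.

Lemma intR2 (a b c c' : R) f g : intR f -> intR g ->
  intR (fun x => a * (f x - c) + b * (g x - c')).
Proof.
move=> H1 H2; apply: intRD; apply: intRZ; apply: intRB => //; exact: intRC.
Qed.

Lemma Ir2 (a b c c' : R) f g : intR f -> intR g ->
  Ir (fun x => a * (f x - c) + b * (g x - c')) = a * (Ir f - c) + b * (Ir g - c').
Proof.
move=> H1 H2.
have J1 : intR (fun x => f x - c) by apply: intRB => //; exact: intRC.
have J2 : intR (fun x => g x - c') by apply: intRB => //; exact: intRC.
rewrite (IrD (intRZ a J1) (intRZ b J2)) (IrZ a J1) (IrZ b J2).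
by rewrite (IrB H1 (intRC c)) (IrB H2 (intRC c')) !IrC.
Qed.

Lemma intR4 (c a b b' : R) f g h : intR f -> intR g -> intR h ->
  intR (fun x => c + a * f x + b * g x + b' * h x).
Proof.
move=> H1 H2 H3.
apply: intRD; [apply: intRD; [apply: intRD; [exact: intRC|exact: intRZ]|exact: intRZ]|exact: intRZ].
Qed.

Lemma Ir4 (c a b b' : R) f g h : intR f -> intR g -> intR h ->
  Ir (fun x => c + a * f x + b * g x + b' * h x) = c + a * Ir f + b * Ir g + b' * Ir h.
Proof.
move=> H1 H2 H3.
rewrite (IrD (intRD (intRD (intRC c) (intRZ a H1)) (intRZ b H2)) (intRZ b' H3)).
rewrite (IrD (intRD (intRC c) (intRZ a H1)) (intRZ b H2)).
rewrite (IrD (intRC c) (intRZ a H1)).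
by rewrite IrC (IrZ a H1) (IrZ b H2) (IrZ b' H3).
Qed.

Lemma intRSZ (I : Type) (s : seq I) (w : I -> R) (F : I -> T -> R) :
  (forall i, intR (F i)) -> intR (fun x => \sum_(i <- s) w i * F i x).
Proof.
move=> H; elim: s => [|i s IH].
  by apply: eq_integrable (intRC 0) => // x _; rewrite /= big_nil.
apply: eq_integrable (intRD (intRZ (w i) (H i)) IH) => // x _.
by rewrite /= big_cons.
Qed.

Lemma IrSZ (I : Type) (s : seq I) (w : I -> R) (F : I -> T -> R) :
  (forall i, intR (F i)) ->
  Ir (fun x => \sum_(i <- s) w i * F i x) = \sum_(i <- s) w i * Ir (F i).
Proof.
move=> H; elim: s => [|i s IH].
  rewrite big_nil (_ : (fun x => _) = (fun _ => 0)) ?IrC //.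
  by apply/funext => x; rewrite big_nil.
rewrite big_cons (_ : (fun x => _) = (fun x => w i * F i x + \sum_(j <- s) w j * F j x)).
  by rewrite (IrD (intRZ (w i) (H i)) (intRSZ s w H)) (IrZ (w i) (H i)) IH.
by apply/funext => x; rewrite big_cons.
Qed.

End IntLib.
Lemma sum2 (V : nmodType) (F : 'I_2 -> V) : \sum_(t < 2) F t = F ord0 + F ord_max.
Proof.
rewrite big_ord_recl big_ord1; congr (_ + F _); exact/val_inj.
Qed.

Lemma state_resample (R : realType) (n : nat) (Xi : Type)
  (G : 'rV[R]_n -> Xi -> 'rV[R]_n) (q : nat) (x0 : 'rV[R]_n)
  (eta : nat -> R) (gamma theta : nat -> 'I_q -> R) (s : nat -> Xi) j xi k :
  (k <= j)%N ->
  sfom_state G x0 eta gamma theta (resample s j xi) k = sfom_state G x0 eta gamma theta s k.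
Proof.
elim: k => [//|k IH] Hk /=.
rewrite IH ?(ltnW Hk) //.
case: (sfom_state G x0 eta gamma theta s k) => [[x xp] mp].
by rewrite /sfom_mom /resample (ltn_eqF Hk).
Qed.

Lemma Tnum (R : realType) (L3 eta c0 th1 th2 g1 g2 nT : R) :
  0 <= L3 -> 0 <= eta -> 0 <= c0 <= 1 -> 0 < g1 < 1 -> 0 < g2 < 1 -> 0 <= nT ->
  nT <= c0 * (L3 * eta ^+ 3 / 6) + `|th1| * (L3 * ((1 - g1) / g1 * eta) ^+ 3 / 6)
        + `|th2| * (L3 * ((1 - g2) / g2 * eta) ^+ 3 / 6) ->
  nT ^+ 2 <= L3 ^+ 2 * eta ^+ 6 / 12 * (1 + th1 ^+ 2 / g1 ^+ 6 + th2 ^+ 2 / g2 ^+ 6).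
Proof.
move=> L3p ep /andP[c00 c01] /andP[g10 g11] /andP[g20 g21] nT0 H.
set B := L3 * eta ^+ 3 / 6.
have B0 : 0 <= B by rewrite /B divr_ge0 // mulr_ge0 // exprn_ge0.
set b1 := ((1 - g1) / g1) ^+ 3; set b2 := ((1 - g2) / g2) ^+ 3.
have e1 : L3 * ((1 - g1) / g1 * eta) ^+ 3 / 6 = b1 * B.
  by rewrite /b1 /B exprMn; ring.
have e2 : L3 * ((1 - g2) / g2 * eta) ^+ 3 / 6 = b2 * B.
  by rewrite /b2 /B exprMn; ring.
rewrite e1 e2 in H.
have bb : forall g : R, 0 < g < 1 ->
    0 <= ((1 - g) / g) ^+ 3 /\ (((1 - g) / g) ^+ 3) ^+ 2 <= 1 / g ^+ 6.
  move=> g /andP[g0 g1']; split.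
    by rewrite exprn_ge0 // divr_ge0 // ?subr_ge0 ltW.
  rewrite -exprM /= expr_div_n ler_pM2r ?invr_gt0 ?exprn_gt0 //.
  apply: exprn_ile1; lra.
have [b10 b1le] := bb g1 (introT andP (conj g10 g11)).
have [b20 b2le] := bb g2 (introT andP (conj g20 g21)).
set u := c0 * B; set v := `|th1| * (b1 * B); set w := `|th2| * (b2 * B).
have u0 : 0 <= u by apply: mulr_ge0.
have v0 : 0 <= v by apply: mulr_ge0 => //; apply: mulr_ge0.
have w0 : 0 <= w by apply: mulr_ge0 => //; apply: mulr_ge0.
have H2 : nT ^+ 2 <= (u + v + w) ^+ 2.
  by rewrite ler_pXn2r // ?nnegrE // ?addr_ge0.
have H3 : (u + v + w) ^+ 2 <= 3 * (u ^+ 2 + v ^+ 2 + w ^+ 2).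
  have := sqr_ge0 (u - v); have := sqr_ge0 (v - w); have := sqr_ge0 (u - w).
  lra.
have hu : u ^+ 2 <= B ^+ 2.
  rewrite /u exprMn; have : c0 ^+ 2 <= 1 by rewrite exprn_ile1.
  have := sqr_ge0 B; nra.
have hv : v ^+ 2 <= th1 ^+ 2 / g1 ^+ 6 * B ^+ 2.
  rewrite /v exprMn (exprMn _ b1 B) (real_normK (num_real th1)).
  have Hth : th1 ^+ 2 * b1 ^+ 2 <= th1 ^+ 2 / g1 ^+ 6.
    apply: ler_wpM2l; first exact: sqr_ge0.
    by rewrite -(mul1r (g1 ^+ 6)^-1).
  have := ler_wpM2r (sqr_ge0 B) Hth; lra.
have hw : w ^+ 2 <= th2 ^+ 2 / g2 ^+ 6 * B ^+ 2.
  rewrite /w exprMn (exprMn _ b2 B) (real_normK (num_real th2)).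
  have Hth : th2 ^+ 2 * b2 ^+ 2 <= th2 ^+ 2 / g2 ^+ 6.
    apply: ler_wpM2l; first exact: sqr_ge0.
    by rewrite -(mul1r (g2 ^+ 6)^-1).
  have := ler_wpM2r (sqr_ge0 B) Hth; lra.
have EB : L3 ^+ 2 * eta ^+ 6 / 12 = 3 * B ^+ 2.
  by rewrite /B; field.
rewrite EB; nra.
Qed.
Section Arith.
Variable R : realType.

Lemma arithF (a p NA X N2 t1 t2 s1 s2 : R) : 0 < p -> 0 <= X -> 0 <= NA ->
  X <= 2 * NA + 2 * N2 -> N2 <= 2 * t1 * s1 + 2 * t2 * s2 ->
  `|a + p * X| <= `|a| + 4 * p * NA + 4 * p * t1 * s1 + 4 * p * t2 * s2.
Proof.
move=> p0 X0 NA0 h1 h2; apply: (le_trans (ler_normD _ _)).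
rewrite normrM (gtr0_norm p0) ger0_norm //.
have h3 := ler_wpM2l (ltW p0) h1; have h4 := ler_wpM2l (ltW p0) h2.
have := mulr_ge0 (ltW p0) NA0.
lra.
Qed.

Lemma arithB (a p NA D N2 t1 t2 s1 s2 : R) : 0 < p ->
  N2 <= 2 * t1 * s1 + 2 * t2 * s2 ->
  a + p * (NA + 2 * D + N2) <= a + p * NA + 2 * p * D + 2 * p * t1 * s1 + 2 * p * t2 * s2.
Proof. move=> p0 h; have := ler_wpM2l (ltW p0) h; lra. Qed.

Lemma final_arith (fx1 fxa dG L1 eta ng ne NA NT th th1 th2 g1 g2 p1 pk L3 sigma I1 I2 : R) :
  0 < th -> 0 < pk -> 0 < p1 -> 0 < g1 -> 0 < g2 ->
  fx1 <= fxa + dG + L1 / 2 * eta ^+ 2 ->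
  dG <= - eta * ng + 2 * eta * ne ->
  NA <= (1 - th) * ne ^+ 2 + NT / th ->
  (1 - th) * p1 <= (1 - th / 2) * pk ->
  NT <= L3 ^+ 2 * eta ^+ 6 / 12 * (1 + th1 ^+ 2 / g1 ^+ 6 + th2 ^+ 2 / g2 ^+ 6) ->
  I1 <= sigma ^+ 2 -> I2 <= sigma ^+ 2 ->
  fx1 + p1 * NA + 2 * p1 * th1 ^+ 2 * I1 + 2 * p1 * th2 ^+ 2 * I2 <=
  fxa + pk * ne ^+ 2 - eta * ng + L1 / 2 * eta ^+ 2 + 2 * eta ^+ 2 / (th * pk)
  + L3 ^+ 2 * eta ^+ 6 * th1 ^+ 2 * p1 / (12 * g1 ^+ 6 * th)
  + L3 ^+ 2 * eta ^+ 6 * th2 ^+ 2 * p1 / (12 * g2 ^+ 6 * th)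
  + L3 ^+ 2 * eta ^+ 6 * p1 / (12 * th)
  + 2 * (th1 ^+ 2 + th2 ^+ 2) * p1 * sigma ^+ 2.
Proof.
move=> th0 pk0 p10 g10 g20 Hd HdG HA Hp HT HI1 HI2.
have e1 : p1 * NA <= p1 * ((1 - th) * ne ^+ 2) + p1 * (NT / th).
  by rewrite -mulrDr; apply: ler_wpM2l => //; exact: ltW.
have e2 := ler_wpM2r (sqr_ge0 ne) Hp.
have e3 : 2 * eta * ne <= th * pk * ne ^+ 2 / 2 + 2 * eta ^+ 2 / (th * pk).
  have Q0 : 0 < th * pk by apply: mulr_gt0.
  have E : th * pk * ne ^+ 2 / 2 + 2 * eta ^+ 2 / (th * pk) - 2 * eta * ne
         = (th * pk * ne - 2 * eta) ^+ 2 / (2 * (th * pk)).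
    by field; rewrite !lt0r_neq0.
  by rewrite -subr_ge0 E divr_ge0 ?sqr_ge0 // mulr_ge0 // ltW.
have e4 : p1 * (NT / th) <= L3 ^+ 2 * eta ^+ 6 * th1 ^+ 2 * p1 / (12 * g1 ^+ 6 * th)
  + L3 ^+ 2 * eta ^+ 6 * th2 ^+ 2 * p1 / (12 * g2 ^+ 6 * th)
  + L3 ^+ 2 * eta ^+ 6 * p1 / (12 * th).
  have h := ler_wpM2l (divr_ge0 (ltW p10) (ltW th0)) HT.
  have E : p1 / th * (L3 ^+ 2 * eta ^+ 6 / 12 * (1 + th1 ^+ 2 / g1 ^+ 6 + th2 ^+ 2 / g2 ^+ 6))
    = L3 ^+ 2 * eta ^+ 6 * th1 ^+ 2 * p1 / (12 * g1 ^+ 6 * th)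
      + L3 ^+ 2 * eta ^+ 6 * th2 ^+ 2 * p1 / (12 * g2 ^+ 6 * th)
      + L3 ^+ 2 * eta ^+ 6 * p1 / (12 * th).
    by field; rewrite ?expf_neq0 ?lt0r_neq0.
  rewrite -E; apply: le_trans h.
  by rewrite [NT / th]mulrC mulrA.
have e5 : 2 * p1 * th1 ^+ 2 * I1 <= 2 * p1 * th1 ^+ 2 * sigma ^+ 2.
  apply: ler_wpM2l => //; apply: mulr_ge0; [apply: mulr_ge0 => //; exact: ltW | exact: sqr_ge0].
have e6 : 2 * p1 * th2 ^+ 2 * I2 <= 2 * p1 * th2 ^+ 2 * sigma ^+ 2.
  apply: ler_wpM2l => //; apply: mulr_ge0; [apply: mulr_ge0 => //; exact: ltW | exact: sqr_ge0].
lra.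
Qed.

Lemma A_bound (n : nat) (e T : 'rV[R]_n) (th : R) : 0 < th < 1 ->
  enorm ((1 - th) *: e + T) ^+ 2 <= (1 - th) * enorm e ^+ 2 + enorm T ^+ 2 / th.
Proof.
move=> /andP[t0 t1].
rewrite enorm_sqD enormZ exprMn (real_normK (num_real _)) dotvZl.
have C := CS e T.
have ne0 := enorm_ge0 e; have nT0 := enorm_ge0 T.
have key : 2 * (enorm e * enorm T) <= th * enorm e ^+ 2 + enorm T ^+ 2 / th.
  have E : th * enorm e ^+ 2 + enorm T ^+ 2 / th - 2 * (enorm e * enorm T)
         = (th * enorm e - enorm T) ^+ 2 / th by field; exact: lt0r_neq0.
  by rewrite -subr_ge0 E divr_ge0 ?sqr_ge0 // ltW.
have c0 : 0 <= 1 - th by lra.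
have h1 := ler_wpM2l c0 C.
have h2 := ler_wpM2l c0 key.
have E2 : th * (enorm T ^+ 2 / th) = enorm T ^+ 2 by field; exact: lt0r_neq0.
nra.
Qed.

Lemma dG_bound (n : nat) (m g : 'rV[R]_n) (eta : R) : 0 < eta -> m != 0 ->
  dotv g (- ((eta / enorm m) *: m)) <= - eta * enorm g + 2 * eta * enorm (m - g).
Proof.
move=> e0 m0.
have nm : 0 < enorm m.
  rewrite lt0r enorm_ge0 andbT; apply/negP => /eqP /enorm_eq0 H.
  by rewrite H eqxx in m0.
set q := eta / enorm m.
have q0 : 0 < q by rewrite divr_gt0.
have qm : q * enorm m = eta by rewrite /q divfK // lt0r_neq0.
rewrite -scaleNr dotvZr.
have gE : g = m - (m - g) by rewrite opprB addrC subrK.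
rewrite {1}gE dotvBl dotv_self.
have C := CS (m - g) m.
have T1 : enorm g <= enorm m + enorm (m - g).
  by rewrite {1}gE; apply: (le_trans (enormD _ _)); rewrite enormN.
have h1 := ler_wpM2l (ltW q0) C.
have h2 := ler_wpM2l (ltW (mulr_gt0 q0 nm)) T1.
rewrite -qm.
have := enorm_ge0 (m - g); have := enorm_ge0 g.
nra.
Qed.

End Arith.
Section TB.
Variables (R : realType) (n : nat).
Variables (gf : 'rV[R]_n -> 'rV[R]_n)
  (D2 : 'rV[R]_n -> 'rV[R]_n -> 'rV[R]_n -> R)
  (D3 : 'rV[R]_n -> 'rV[R]_n -> 'rV[R]_n -> 'rV[R]_n -> R) (L3 : R).
Hypothesis HD2 : forall x h1, frechet_at (fun y => dotv (gf y) h1) x (D2 x h1).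
Hypothesis HD3 : forall x h1 h2, frechet_at (fun y => D2 y h1 h2) x (D3 x h1 h2).
Hypothesis HL3 : forall x y h1 h2 h3, enorm h1 <= 1 -> enorm h2 <= 1 -> enorm h3 <= 1 ->
     D3 y h1 h2 h3 - D3 x h1 h2 h3 <= L3 * enorm (y - x).

Lemma Tbound (L3p : 0 <= L3) (x1 xa : 'rV[R]_n) (th1 th2 g1 g2 : R) :
  0 < g1 < 1 -> 0 < g2 < 1 -> 0 <= 1 - (th1 + th2) <= 1 ->
  th1 / g1 + th2 / g2 = 1 -> th1 / g1 ^+ 2 + th2 / g2 ^+ 2 = 1 ->
  enorm ((1 - (th1 + th2)) *: gf xa + th1 *: gf (x1 + ((1 - g1) / g1) *: (x1 - xa))
         + th2 *: gf (x1 + ((1 - g2) / g2) *: (x1 - xa)) - gf x1) ^+ 2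
  <= L3 ^+ 2 * enorm (x1 - xa) ^+ 6 / 12 * (1 + th1 ^+ 2 / g1 ^+ 6 + th2 ^+ 2 / g2 ^+ 6).
Proof.
move=> G1 G2 C0 k1 k2.
have /andP[g10 g11] := G1; have /andP[g20 g21] := G2.
have /andP[c00 c01] := C0.
set dd := x1 - xa; set a1 := (1 - g1) / g1; set a2 := (1 - g2) / g2.
set c0 := 1 - (th1 + th2).
set T := c0 *: gf xa + th1 *: gf (x1 + a1 *: dd) + th2 *: gf (x1 + a2 *: dd) - gf x1.
set eta := enorm dd.
have eta0 : 0 <= eta by exact: enorm_ge0.
have a1p : 0 <= a1 by rewrite /a1 divr_ge0 ?subr_ge0 ?ltW.
have a2p : 0 <= a2 by rewrite /a2 divr_ge0 ?subr_ge0 ?ltW.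
apply: (@Tnum R L3 eta c0 th1 th2 g1 g2 (enorm T)) => //; first exact: enorm_ge0.
rewrite -/a1 -/a2.
have P3 : forall z : R, 0 <= z -> 0 <= L3 * z ^+ 3 / 6.
  by move=> z z0; rewrite divr_ge0 // mulr_ge0 // exprn_ge0.
have [T0|T0] := eqVneq (enorm T) 0.
  rewrite T0; apply: addr_ge0; first apply: addr_ge0.
  - exact: mulr_ge0 c00 (P3 _ eta0).
  - exact: mulr_ge0 (normr_ge0 _) (P3 _ (mulr_ge0 a1p eta0)).
  - exact: mulr_ge0 (normr_ge0 _) (P3 _ (mulr_ge0 a2p eta0)).
have Tp : 0 < enorm T by rewrite lt0r T0 enorm_ge0.
set h := (enorm T)^-1 *: T.
have hn : enorm h <= 1.
  by rewrite /h enormZ ger0_norm ?invr_ge0 ?enorm_ge0 // mulVf.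
have dT : dotv T h = enorm T.
  by rewrite /h dotvZr dotv_self expr2 mulrA mulVf // mul1r.
set w0 := (-1) *: dd.
have xaE : x1 + w0 = xa.
  by apply/rowP => i; rewrite /w0 /dd !mxE; ring.
have TE : T = c0 *: (gf (x1 + w0) - gf x1) + th1 *: (gf (x1 + a1 *: dd) - gf x1)
              + th2 *: (gf (x1 + a2 *: dd) - gf x1).
  by rewrite xaE; apply/rowP => i; rewrite /T /c0 !mxE; ring.
set d2 := D2 x1 h dd; set d3 := D3 x1 h dd dd.
have t0 := taylor3 HD2 HD3 HL3 L3p x1 w0 hn.
rewrite /w0 (D2Z HD2) (D3Zm HD2 HD3) (D3Zr HD3) enormZ normrN normr1 mul1r in t0.
have t1 := taylor3 HD2 HD3 HL3 L3p x1 (a1 *: dd) hn.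
rewrite (D2Z HD2) (D3Zm HD2 HD3) (D3Zr HD3) enormZ (ger0_norm a1p) in t1.
have t2 := taylor3 HD2 HD3 HL3 L3p x1 (a2 *: dd) hn.
rewrite (D2Z HD2) (D3Zm HD2 HD3) (D3Zr HD3) enormZ (ger0_norm a2p) in t2.
rewrite -/eta in t0 t1 t2.
set R0 := (X in `|X| <= _) in t0.
set R1 := (X in `|X| <= _) in t1.
set R2 := (X in `|X| <= _) in t2.
have g1n : g1 != 0 by exact: lt0r_neq0.
have g2n : g2 != 0 by exact: lt0r_neq0.
have e1 : th1 * a1 = th1 / g1 - th1 by rewrite /a1; field.
have e2 : th2 * a2 = th2 / g2 - th2 by rewrite /a2; field.
have e1' : th1 * (a1 * a1) = th1 / g1 ^+ 2 - 2 * (th1 / g1) + th1 by rewrite /a1; field.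
have e2' : th2 * (a2 * a2) = th2 / g2 ^+ 2 - 2 * (th2 / g2) + th2 by rewrite /a2; field.
have kk1 : - c0 + th1 * a1 + th2 * a2 = 0 by rewrite /c0; lra.
have kk2 : c0 + th1 * (a1 * a1) + th2 * (a2 * a2) = 0 by rewrite /c0; lra.
have ET : enorm T = c0 * R0 + th1 * R1 + th2 * R2
    + ((- c0 + th1 * a1 + th2 * a2) * d2 + (c0 + th1 * (a1 * a1) + th2 * (a2 * a2)) * d3 / 2).
  rewrite -dT {1}TE !dotvDl !dotvZl !dotvBl /R0 /R1 /R2 /w0 -/d2 -/d3; ring.
have ET' : enorm T = c0 * R0 + th1 * R1 + th2 * R2 by rewrite ET kk1 kk2; ring.
have b0 : c0 * R0 <= c0 * (L3 * eta ^+ 3 / 6).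
  apply: ler_wpM2l; first exact: c00.
  exact: le_trans (ler_norm _) t0.
have b1 : th1 * R1 <= `|th1| * (L3 * (a1 * eta) ^+ 3 / 6).
  apply: (le_trans (ler_norm _)); rewrite normrM.
  apply: ler_wpM2l; [exact: normr_ge0 | exact: t1].
have b2 : th2 * R2 <= `|th2| * (L3 * (a2 * eta) ^+ 3 / 6).
  apply: (le_trans (ler_norm _)); rewrite normrM.
  apply: ler_wpM2l; [exact: normr_ge0 | exact: t2].
rewrite ET'; lra.
Qed.

End TB.
Local Open Scope ring_scope.

Unset Implicit Arguments. Set Strict Implicit.
Theorem theorem3p3 (R : realType) (n : nat) (d : measure_display)
  (Xi : measurableType d) (P : probability Xi R)
  (f : 'rV[R]_n -> R) (gf : 'rV[R]_n -> 'rV[R]_n)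
  (D2 : 'rV[R]_n -> 'rV[R]_n -> 'rV[R]_n -> R)
  (D3 : 'rV[R]_n -> 'rV[R]_n -> 'rV[R]_n -> 'rV[R]_n -> R)
  (G : 'rV[R]_n -> Xi -> 'rV[R]_n) (flow L1 L3 sigma : R)
  (x0 : 'rV[R]_n) (eta : nat -> R) (gamma theta : nat -> 'I_2 -> R)
  (p : nat -> R) :
  (* Assumption A *)
  (forall x, flow <= f x) ->
  (forall x, frechet_at f x (dotv (gf x))) ->
  0 < L1 -> (forall x y, enorm (gf y - gf x) <= L1 * enorm (y - x)) ->
  0 < sigma ->
  (forall x (i : 'I_n), P.-integrable setT (fun xi => (G x xi 0 i)%:E) /\
     (\int[P]_xi (G x xi 0 i)%:E = (gf x 0 i)%:E)%E) ->
  (forall x, (\int[P]_xi ((enorm (G x xi - gf x)) ^+ 2)%:E <= (sigma ^+ 2)%:E)%E) ->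
  (* Assumption B with p = 3: D2, D3 are the 2nd and 3rd derivatives *)
  (forall x h1, frechet_at (fun y => dotv (gf y) h1) x (D2 x h1)) ->
  (forall x h1 h2, frechet_at (fun y => D2 y h1 h2) x (D3 x h1 h2)) ->
  0 < L3 ->
  (forall x y h1 h2 h3, enorm h1 <= 1 -> enorm h2 <= 1 -> enorm h3 <= 1 ->
     D3 y h1 h2 h3 - D3 x h1 h2 h3 <= L3 * enorm (y - x)) ->
  (* Algorithm 1 parameters, q = 2 *)
  (forall k, 0 < eta k) ->
  (forall k t, 0 < gamma k t < 1) ->
  (forall k, 0 < \sum_(t < 2) theta k t < 1) ->
  (forall k, theta k ord0 / gamma k ord0 + theta k ord_max / gamma k ord_max = 1) ->
  (forall k, theta k ord0 / gamma k ord0 ^+ 2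
             + theta k ord_max / gamma k ord_max ^+ 2 = 1) ->
  (forall k, 0 < theta k ord0 + theta k ord_max < 1) ->
  (forall k, 0 < p k) ->
  (forall k, (1 - (theta k ord0 + theta k ord_max)) * p k.+1
             <= (1 - (theta k ord0 + theta k ord_max) / 2) * p k) ->
  forall (s : nat -> Xi) (k : nat),
  sfom_m G x0 eta gamma theta s k != 0 ->
  let xk := sfom_x G x0 eta gamma theta s k in
  let mk := sfom_m G x0 eta gamma theta s k in
  let th1 := theta k ord0 in let th2 := theta k ord_max in
  let g1 := gamma k ord0 in let g2 := gamma k ord_max in
  (\int[P]_xi
     (f (sfom_x G x0 eta gamma theta (resample s k.+1 xi) k.+1)
      + p k.+1 * enorm (sfom_m G x0 eta gamma theta (resample s k.+1 xi) k.+1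
                        - gf (sfom_x G x0 eta gamma theta (resample s k.+1 xi) k.+1)) ^+ 2)%:E
   <= (f xk + p k * enorm (mk - gf xk) ^+ 2
       - eta k * enorm (gf xk) + L1 / 2 * eta k ^+ 2
       + 2 * eta k ^+ 2 / ((th1 + th2) * p k)
       + L3 ^+ 2 * eta k ^+ 6 * th1 ^+ 2 * p k.+1 / (12 * g1 ^+ 6 * (th1 + th2))
       + L3 ^+ 2 * eta k ^+ 6 * th2 ^+ 2 * p k.+1 / (12 * g2 ^+ 6 * (th1 + th2))
       + L3 ^+ 2 * eta k ^+ 6 * p k.+1 / (12 * (th1 + th2))
       + 2 * (th1 ^+ 2 + th2 ^+ 2) * p k.+1 * sigma ^+ 2)%:E)%E.
Proof.
move=> Hlow Hf L1p HL1 sigp HG HV HD2 HD3 L3p HL3 etap gam01 sum01 c1 c2 th01 pp pstep s k mk0.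
cbv zeta.
set xk := sfom_x G x0 eta gamma theta s k.
set mk := sfom_m G x0 eta gamma theta s k.
set th1 := theta k ord0; set th2 := theta k ord_max.
set g1 := gamma k ord0; set g2 := gamma k ord_max.
case Est: (sfom_state G x0 eta gamma theta s k) => [[xa xp] mp].
have xkE : xk = xa by rewrite /xk /sfom_x Est.
have mkE : mk = sfom_mom G gamma theta s k xa xp mp by rewrite /mk /sfom_m Est.
set p1 := p k.+1; set pk := p k.
set th := th1 + th2.
set x1 := xa - (eta k / enorm mk) *: mk.
set dd := x1 - xa.
set a1 := (1 - g1) / g1; set a2 := (1 - g2) / g2.
set z1 := x1 + a1 *: dd; set z2 := x1 + a2 *: dd.
set e := mk - gf xa.
set T := (1 - th) *: gf xa + th1 *: gf z1 + th2 *: gf z2 - gf x1.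
set A := (1 - th) *: e + T.
pose N := fun xi => th1 *: (G z1 xi - gf z1) + th2 *: (G z2 xi - gf z2).
pose F := fun xi => f x1 + p1 * enorm (A + N xi) ^+ 2.
have Hx1 : forall xi, sfom_x G x0 eta gamma theta (resample s k.+1 xi) k.+1 = x1.
  move=> xi; rewrite /sfom_x state_resample //= Est /=.
  by rewrite -mkE.
have Hm1 : forall xi, sfom_m G x0 eta gamma theta (resample s k.+1 xi) k.+1
    = (1 - th) *: mk + (th1 *: G z1 xi + th2 *: G z2 xi).
  move=> xi; rewrite /sfom_m state_resample //= Est /= -mkE /sfom_mom !sum2 /=.
  by rewrite /resample eqxx.
have Hint : forall xi,
    f (sfom_x G x0 eta gamma theta (resample s k.+1 xi) k.+1) +
    p1 * enorm (sfom_m G x0 eta gamma theta (resample s k.+1 xi) k.+1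
                - gf (sfom_x G x0 eta gamma theta (resample s k.+1 xi) k.+1)) ^+ 2
    = F xi.
  move=> xi; rewrite Hx1 Hm1 /F; congr (_ + _ * enorm _ ^+ 2).
  apply/rowP => i; rewrite /A /T /e /N !mxE; ring.
rewrite (eq_integral (fun xi => (F xi)%:E)); last by move=> xi _; rewrite Hint.
pose Y1 := fun (i : 'I_n) xi => G z1 xi 0 i.
pose Y2 := fun (i : 'I_n) xi => G z2 xi 0 i.
pose u := fun (i : 'I_n) xi => th1 * (Y1 i xi - gf z1 0 i) + th2 * (Y2 i xi - gf z2 0 i).
have iY1 : forall i, intR P (Y1 i) by move=> i; exact: (HG z1 i).1.
have iY2 : forall i, intR P (Y2 i) by move=> i; exact: (HG z2 i).1.
have IY1 : forall i, Ir P (Y1 i) = gf z1 0 i by move=> i; rewrite /Ir /Y1 (HG z1 i).2.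
have IY2 : forall i, Ir P (Y2 i) = gf z2 0 i by move=> i; rewrite /Ir /Y2 (HG z2 i).2.
have iu : forall i, intR P (u i) by move=> i; exact: intR2.
have Iu : forall i, Ir P (u i) = 0.
  by move=> i; rewrite /u Ir2 // IY1 IY2 !subrr !mulr0 addr0.
pose S1 := fun xi => enorm (G z1 xi - gf z1) ^+ 2.
pose S2 := fun xi => enorm (G z2 xi - gf z2) ^+ 2.
have S1E : S1 = fun xi => \sum_(i < n) (Y1 i xi - gf z1 0 i) * (Y1 i xi - gf z1 0 i).
  apply/funext => xi; rewrite /S1 enorm_sq /dotv; apply: eq_bigr => i _.
  by rewrite /Y1 !mxE.
have S2E : S2 = fun xi => \sum_(i < n) (Y2 i xi - gf z2 0 i) * (Y2 i xi - gf z2 0 i).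
  apply/funext => xi; rewrite /S2 enorm_sq /dotv; apply: eq_bigr => i _.
  by rewrite /Y2 !mxE.
have mS1 : measurable_fun setT S1.
  rewrite S1E; apply: measurable_sum => i; apply: measurable_funM;
    apply: measurable_funB; try exact: measurable_cst; exact: intR_meas (iY1 i).
have mS2 : measurable_fun setT S2.
  rewrite S2E; apply: measurable_sum => i; apply: measurable_funM;
    apply: measurable_funB; try exact: measurable_cst; exact: intR_meas (iY2 i).
have iS1 : intR P S1.
  apply: intR_ge0 => // [xi|]; first exact: sqr_ge0.
  by apply: (le_lt_trans (HV z1)); exact: ltry.
have iS2 : intR P S2.
  apply: intR_ge0 => // [xi|]; first exact: sqr_ge0.
  by apply: (le_lt_trans (HV z2)); exact: ltry.
have IS1 : Ir P S1 <= sigma ^+ 2 by rewrite -lee_fin -(IrE iS1); exact: HV z1.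
have IS2 : Ir P S2 <= sigma ^+ 2 by rewrite -lee_fin -(IrE iS2); exact: HV z2.
have p1p : 0 < p1 by exact: pp.
pose C1 := f x1 + p1 * enorm A ^+ 2.
pose B := fun xi => C1 + 2 * p1 * (\sum_(i < n) A 0 i * u i xi)
                   + 2 * p1 * th1 ^+ 2 * S1 xi + 2 * p1 * th2 ^+ 2 * S2 xi.
have iSum : intR P (fun xi => \sum_(i < n) A 0 i * u i xi) by exact: intRSZ.
have iB : intR P B by exact: intR4.
have ISum : Ir P (fun xi => \sum_(i < n) A 0 i * u i xi) = 0.
  by rewrite IrSZ //; apply: big1 => i _; rewrite Iu mulr0.
have IB : Ir P B = C1 + 2 * p1 * th1 ^+ 2 * Ir P S1 + 2 * p1 * th2 ^+ 2 * Ir P S2.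
  by rewrite /B Ir4 // ISum mulr0 addr0.
have dAN : forall xi, dotv A (N xi) = \sum_(i < n) A 0 i * u i xi.
  move=> xi; rewrite /dotv; apply: eq_bigr => i _.
  by rewrite /N /u /Y1 /Y2 !mxE.
have Nb : forall xi, enorm (N xi) ^+ 2 <= 2 * th1 ^+ 2 * S1 xi + 2 * th2 ^+ 2 * S2 xi.
  move=> xi; apply: (le_trans (enorm_sqD2 _ _)).
  by rewrite !enormZ !exprMn !(real_normK (num_real _)) /S1 /S2 !mulrA lexx.
have FE : F = fun xi => f x1 + p1 * \sum_(i < n) (A 0 i + u i xi) * (A 0 i + u i xi).
  apply/funext => xi; rewrite /F enorm_sq /dotv; congr (_ + _ * _).
  by apply: eq_bigr => i _; rewrite /N /u /Y1 /Y2 !mxE.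
have mF : measurable_fun setT F.
  rewrite FE; apply: measurable_funD; first exact: measurable_cst.
  apply: measurable_funM; first exact: measurable_cst.
  apply: measurable_sum => i; apply: measurable_funM;
    (apply: measurable_funD; [exact: measurable_cst | exact: intR_meas (iu i)]).
have iF : intR P F.
  pose g := fun xi => `|f x1| + 4 * p1 * enorm A ^+ 2 + 4 * p1 * th1 ^+ 2 * S1 xi
                     + 4 * p1 * th2 ^+ 2 * S2 xi.
  have ig : intR P g.
    have := @intR4 _ _ _ P (`|f x1| + 4 * p1 * enorm A ^+ 2) 0 (4 * p1 * th1 ^+ 2)
      (4 * p1 * th2 ^+ 2) S1 S1 S2 iS1 iS1 iS2.
    by apply: eq_integrable => // xi _; rewrite /comp /g mul0r addr0.
  apply: (intR_le mF ig) => xi; rewrite /F /g.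
  apply: arithF => //; [exact: sqr_ge0 | exact: sqr_ge0 | exact: enorm_sqD2].
have FB : forall xi, F xi <= B xi.
  move=> xi; rewrite /F /B /C1 enorm_sqD dAN.
  apply: arithB => //; exact: Nb.
rewrite (IrE iF) lee_fin.
apply: (le_trans (Ir_le iF iB FB)); rewrite IB /C1 xkE -/e.
have th0 : 0 < th < 1 := th01 k.
have /andP[th0' thlt1] := th0.
have pk0 : 0 < pk := pp k.
have g1r := gam01 k ord0; have g2r := gam01 k ord_max.
rewrite -/g1 in g1r; rewrite -/g2 in g2r.
have /andP[g10 _] := g1r; have /andP[g20 _] := g2r.
have mk0' : mk != 0 := mk0.
have x1E : xa + dd = x1 by rewrite /dd addrC subrK.
have ddE : dd = - ((eta k / enorm mk) *: mk) by rewrite /dd /x1 addrAC subrr add0r.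
have nmk : 0 < enorm mk.
  rewrite lt0r enorm_ge0 andbT; apply/negP => /eqP /enorm_eq0 H0.
  by rewrite H0 eqxx in mk0'.
have ndd : enorm dd = eta k.
  rewrite ddE enormN enormZ ger0_norm ?divr_ge0 ?enorm_ge0 ?ltW //.
  by rewrite divfK // lt0r_neq0.
have Hdesc := descent Hf HL1 xa dd; rewrite x1E ndd in Hdesc.
have HdG := dG_bound (gf xa) (etap k) mk0'; rewrite -ddE -/e in HdG.
have HA := A_bound e T th0; rewrite -/A in HA.
have c0r : 0 <= 1 - (th1 + th2) <= 1.
  rewrite -/th; apply/andP; split; first by rewrite subr_ge0; exact: ltW.
  by rewrite lerBlDr lerDl; exact: ltW.
have HT := Tbound HD2 HD3 HL3 (ltW L3p) x1 xa g1r g2r c0r (c1 k) (c2 k).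
rewrite -/th1 -/th2 -/g1 -/g2 -/dd -/a1 -/a2 -/z1 -/z2 -/th -/T ndd in HT.
have Hp := pstep k; rewrite -/th1 -/th2 -/th -/p1 -/pk in Hp.
exact: (final_arith th0' pk0 p1p g10 g20 Hdesc HdG HA Hp HT IS1 IS2).
Qed.
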